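(* Let $p,N\in\mathbb{N}$, $x_0<\cdots<x_N$, data $y_{n,2k}\in\mathbb{R}$ ($n=0,\dots,N$, $k=0,\dots,p$), and $\alpha\in\Theta_{2p}$. Let $\ell_\alpha$ be the Lidstone FIF and $\phi$ the classical Lidstone interpolation function for this data. Then $$\|\ell_\alpha-\phi\|_\infty\le\frac{|\alpha|_\infty}{1-|\alpha|_\infty}\big(\|\phi\|_\infty+M_{0,2p}\big),\qquad M_{0,2p}=\frac{2\rho\pi}{3}\sum_{l=0}^{p}\Big(\frac{x_N-x_0}{\pi}\Big)^{2l}.$$
   Context: Lidstone polynomials $\Lambda_l$: $\Lambda_0(x)=x$, $\Lambda_l''=\Lambda_{l-1}$, $\Lambda_l(0)=\Lambda_l(1)=0$ for $l\ge1$. $a_n=\frac{x_n-x_{n-1}}{x_N-x_0}$, $L_n(x)=a_nx+\frac{x_Nx_{n-1}-x_0x_n}{x_N-x_0}$. $\Theta_{2p}=\{\alpha\in\mathbb{R}^N:|\alpha_n|<a_n^{2p}\ \forall n\}$. For $\alpha\in\Theta_{2p}$, the Lidstone FIF $\ell_\alpha$ is the unique $C^{2p}[x_0,x_N]$ function satisfying $\ell_\alpha(L_n(x))=\alpha_n\ell_\alpha(x)+q_n(x)$ for $x\in[x_0,x_N]$, $n=1,\dots,N$, where $q_n(x)=\sum_{l=0}^p[(a_n^{2l}y_{n-1,2l}-\alpha_ny_{0,2l})\Lambda_l(\frac{x_N-x}{x_N-x_0})+(a_n^{2l}y_{n,2l}-\alpha_ny_{N,2l})\Lambda_l(\frac{x-x_0}{x_N-x_0})](x_N-x_0)^{2l}$;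 it satisfies $\ell_\alpha^{(2k)}(x_n)=y_{n,2k}$. The classical Lidstone interpolation function $\phi$ is defined on each $[x_{n-1},x_n]$, with $h_n=x_n-x_{n-1}$, by $\phi(x)=\sum_{l=0}^p\big[y_{n-1,2l}\Lambda_l(\frac{x_n-x}{h_n})+y_{n,2l}\Lambda_l(\frac{x-x_{n-1}}{h_n})\big]h_n^{2l}$ (it equals $\ell_0$). Notation: $|\alpha|_\infty=\max_n|\alpha_n|$, $\|f\|_\infty=\sup_{[x_0,x_N]}|f|$, $\rho=\max_{0\le k\le p}\max\{|y_{0,2k}|,|y_{N,2k}|\}$. *)

(* Defs.v *)
From Stdlib Require Import Reals Lra Lia ClassicalEpsilon.
Open Scope R_scope.

Definition is_lidstone_family (Lam : nat -> R -> R) : Prop :=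
  (forall t, Lam 0%nat t = t) /\
  (forall l : nat, (1 <= l)%nat ->
     Lam l 0 = 0 /\ Lam l 1 = 0 /\
     exists D : R -> R, forall t,
       derivable_pt_lim (Lam l) t (D t) /\
       derivable_pt_lim D t (Lam (l - 1)%nat t)).

Definition a_coef (x : nat -> R) (N n : nat) : R :=
  (x n - x (n - 1)%nat) / (x N - x 0%nat).
Definition L_map (x : nat -> R) (N n : nat) (t : R) : R :=
  a_coef x N n * t + (x N * x (n - 1)%nat - x 0%nat * x n) / (x N - x 0%nat).

Definition in_Theta (x : nat -> R) (N p : nat) (alpha : nat -> R) : Prop :=
  forall n, (1 <= n <= N)%nat -> Rabs (alpha n) < a_coef x N n ^ (2 * p).

(* y n k stands for y_{n,2k} *)
Definition q_fun (Lam : nat -> R -> R) (x : nat -> R) (y : nat -> nat -> R)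
  (alpha : nat -> R) (N p n : nat) (t : R) : R :=
  sum_f_R0 (fun l =>
    ((a_coef x N n ^ (2 * l) * y (n - 1)%nat l - alpha n * y 0%nat l)
       * Lam l ((x N - t) / (x N - x 0%nat))
     + (a_coef x N n ^ (2 * l) * y n l - alpha n * y N l)
       * Lam l ((t - x 0%nat) / (x N - x 0%nat)))
    * (x N - x 0%nat) ^ (2 * l)) p.

Definition derive_within (a b : R) (f : R -> R) (t l : R) : Prop :=
  forall eps, 0 < eps -> exists delta, 0 < delta /\
    forall h, h <> 0 -> Rabs h < delta -> a <= t + h <= b ->
      Rabs ((f (t + h) - f t) / h - l) < eps.

Definition continuous_within (a b : R) (f : R -> R) (t : R) : Prop :=
  forall eps, 0 < eps -> exists delta, 0 < delta /\
    forall s, a <= s <= b -> Rabs (s - t) < delta -> Rabs (f s - f t) < eps.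

Definition C_on (m : nat) (a b : R) (f : R -> R) : Prop :=
  exists D : nat -> R -> R,
    (forall t, a <= t <= b -> D 0%nat t = f t) /\
    (forall k, (k < m)%nat -> forall t, a <= t <= b ->
        derive_within a b (D k) t (D (S k) t)) /\
    (forall t, a <= t <= b -> continuous_within a b (D m) t).

Definition sup_norm (a b : R) (f : R -> R) : R :=
  epsilon (inhabits 0)
    (fun s => is_lub (fun v => exists t, a <= t <= b /\ v = Rabs (f t)) s).

Fixpoint alpha_max (alpha : nat -> R) (N : nat) : R :=
  match N with
  | O => 0
  | S n => Rmax (alpha_max alpha n) (Rabs (alpha (S n)))
  end.

Fixpoint rho_max (y : nat -> nat -> R) (N p : nat) : R :=
  match p with
  | O => Rmax (Rabs (y 0%nat 0%nat)) (Rabs (y N 0%nat))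
  | S k => Rmax (rho_max y N k) (Rmax (Rabs (y 0%nat (S k))) (Rabs (y N (S k))))
  end.

Definition M0 (x : nat -> R) (y : nat -> nat -> R) (N p : nat) : R :=
  2 * rho_max y N p * PI / 3 *
  sum_f_R0 (fun l => ((x N - x 0%nat) / PI) ^ (2 * l)) p.

(* Main.v *)
From Stdlib Require Import Reals Lra Lia Psatz Ratan ClassicalEpsilon.
From Coquelicot Require Import Coquelicot.
Require Import Defs.
Open Scope R_scope.
Lemma PI_lt : PI <= 7/2.
Proof.
  destruct (PI_ineq 1) as [_ H]. unfold tg_alt, PI_tg in H. simpl in H. lra.
Qed.
Lemma PI_ge : 3 <= PI.
Proof.
  destruct (PI_ineq 3) as [H _]. unfold tg_alt, PI_tg in H. simpl in H. lra.
Qed.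
Lemma sin_cube a : 0 <= a -> a <= PI/2 -> a - a^3/6 <= sin a.
Proof.
  intros H1 H2. destruct (SIN a H1 ltac:(lra)) as [H _].
  unfold sin_lb, sin_approx, sin_term in H. simpl in H.
  assert (a <= 2) by (pose PI_lt; lra).
  assert (0 <= a^5) by (apply pow_le; lra).
  assert (0 <= a^5 * (42 - a*a)) by (apply Rmult_le_pos; nra).
  lra.
Qed.
Lemma concave_nonneg (f f' f'' : R -> R) :
  (forall t, derivable_pt_lim f t (f' t)) ->
  (forall t, derivable_pt_lim f' t (f'' t)) ->
  (forall t, 0 <= t <= 1 -> f'' t <= 0) ->
  0 <= f 0 -> 0 <= f 1 -> forall t, 0 <= t <= 1 -> 0 <= f t.
Proof.
  intros d1 d2 hc h0 h1 t ht.
  destruct (Rle_or_lt 0 (f t)) as [|Hlt]; [assumption|exfalso].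
  assert (t0 : 0 < t). { destruct (Req_dec t 0); [subst; lra|lra]. }
  assert (t1 : t < 1). { destruct (Req_dec t 1); [subst; lra|lra]. }
  destruct (MVT_cor2 f f' 0 t t0 (fun c _ => d1 c)) as [c1 [e1 r1]].
  destruct (MVT_cor2 f f' t 1 t1 (fun c _ => d1 c)) as [c2 [e2 r2]].
  assert (f' c1 < 0) by nra.
  assert (f' c2 > 0) by nra.
  assert (c1 < c2) by lra.
  destruct (MVT_cor2 f' f'' c1 c2 H1 (fun c _ => d2 c)) as [c [e r]].
  assert (f'' c <= 0) by (apply hc; lra).
  nra.
Qed.
Lemma dsin C t : derivable_pt_lim (fun t => C * sin (PI * t)) t (C * PI * cos (PI*t)).
Proof. apply is_derive_Reals. auto_derive; [easy|ring]. Qed.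
Lemma dcos C t : derivable_pt_lim (fun t => C * PI * cos (PI * t)) t (- C*PI*PI * sin(PI*t)).
Proof. apply is_derive_Reals. auto_derive; [easy|ring]. Qed.
Lemma dpoly t : derivable_pt_lim (fun t => (t^3 - t)/6) t ((3*t^2-1)/6).
Proof. apply is_derive_Reals. auto_derive; [easy|field]. Qed.
Lemma dpoly2 t : derivable_pt_lim (fun t => (3*t^2-1)/6) t t.
Proof. apply is_derive_Reals. auto_derive; [easy|field]. Qed.

Lemma poly_sin t : 0 <= t <= 1 -> (t - t^3)/6 <= sin (PI*t) / (3*PI).
Proof.
  intros ht. pose proof PI_lt. pose proof PI_ge.
  assert (K : (t - t^3) * PI / 2 <= sin (PI*t)).
  2:{ apply (Rmult_le_reg_r (3*PI)); [lra|].
      replace (sin(PI*t)/(3*PI)*(3*PI)) with (sin (PI*t)) by (field; lra). lra. }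
  destruct (Rle_or_lt t (1/2)).
  - pose proof (sin_cube (PI*t) ltac:(nra) ltac:(nra)).
    assert (t * (t*t*(PI*PI-3) - 3) <= 0).
    { apply Rmult_le_0_l; [lra|]. assert (t*t <= 1/4) by nra.
      assert (PI*PI <= 49/4) by nra. nra. }
    nra.
  - set (s := 1 - t).
    replace (PI * t) with (PI - PI*s) by (unfold s; ring).
    rewrite sin_PI_x.
    pose proof (sin_cube (PI*s) ltac:(unfold s; nra) ltac:(unfold s; nra)).
    assert (s * (s*(1+PI*PI/3) - 3) <= 0).
    { apply Rmult_le_0_l; [unfold s; lra|].
      assert (PI*PI <= 49/4) by nra. assert (s <= 1/2) by (unfold s; lra).
      assert (0 <= s) by (unfold s; lra). nra. }
    replace t with (1 - s) by (unfold s; ring).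
    assert (0 <= s <= 1/2) by (unfold s; lra). clearbody s.
    assert (E: (1-s - (1-s)^3)*PI/2 - (PI*s - (PI*s)^3/6) = PI/2 * s * (s * (s*(1+PI*PI/3)-3))) by field.
    assert (PI/2 * s * (s * (s*(1+PI*PI/3)-3)) <= 0).
    { apply Rmult_le_0_l; [|lra]. apply Rmult_le_pos; lra. }
    lra.
Qed.

Lemma lid_bound Lam : is_lidstone_family Lam ->
  forall k t, 0 <= t <= 1 -> Rabs (Lam (S k) t) <= sin (PI*t) * / (3*PI^(2*k+1)).
Proof.
  intros [H0 HL] k. pose proof PI_ge as Hpi.
  induction k as [|k IH]; intros t ht.
  - destruct (HL 1%nat ltac:(lia)) as [a0 [a1 [D HD]]].
    simpl in HD.
    assert (E : forall t, 0 <= t <= 1 -> Lam 1%nat t = (t^3-t)/6).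
    { intros u hu. apply Rle_antisym.
      - assert (0 <= (fun t => (t^3-t)/6 - Lam 1%nat t) u); [|simpl in *; lra].
        apply (concave_nonneg (fun t => (t^3-t)/6 - Lam 1%nat t) (fun t => (3*t^2-1)/6 - D t) (fun t => t - Lam 0%nat t)).
        + intro; apply derivable_pt_lim_minus; [apply dpoly| apply HD].
        + intro; apply derivable_pt_lim_minus; [apply dpoly2| apply HD].
        + intros; rewrite H0; lra.
        + rewrite a0; simpl; lra.
        + rewrite a1; simpl; lra.
        + auto.
      - assert (0 <= (fun t => Lam 1%nat t - (t^3-t)/6) u); [|simpl in *; lra].
        apply (concave_nonneg (fun t => Lam 1%nat t - (t^3-t)/6) (fun t => D t - (3*t^2-1)/6) (fun t => Lam 0%nat t - t)).
        + intro; apply derivable_pt_lim_minus; [apply HD| apply dpoly].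
        + intro; apply derivable_pt_lim_minus; [apply HD| apply dpoly2].
        + intros; rewrite H0; lra.
        + rewrite a0; simpl; lra.
        + rewrite a1; simpl; lra.
        + auto. }
    rewrite E by auto.
    rewrite Rabs_left1.
    2:{ assert (0 <= t*(1-t*t)) by (apply Rmult_le_pos; nra). simpl. lra. }
    replace (- ((t^3-t)/6)) with ((t - t^3)/6) by field.
    simpl (2*0+1)%nat. rewrite pow_1. apply poly_sin; auto.
  - destruct (HL (S (S k)) ltac:(lia)) as [a0 [a1 [D HD]]].
    replace (S (S k) - 1)%nat with (S k) in HD by lia.
    set (c := / (3 * PI ^ (2 * k + 1))).
    assert (cpos : 0 < c). { unfold c. apply Rinv_0_lt_compat. 
      apply Rmult_lt_0_compat; [lra| apply pow_lt; lra]. }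
    set (C := c / (PI*PI)).
    assert (EC : / (3 * PI ^ (2 * S k + 1)) = C).
    { unfold C, c. replace (2 * S k + 1)%nat with (S (S (2*k+1))) by lia.
      simpl pow. field. split; [apply pow_nonzero|]; lra. }
    rewrite EC.
    assert (Hs : forall u, 0 <= u <= 1 -> 0 <= sin (PI*u)).
    { intros; apply sin_ge_0; nra. }
    assert (B1 : 0 <= (fun t => C * sin (PI*t) - Lam (S (S k)) t) t).
    { apply (concave_nonneg (fun t => C * sin (PI*t) - Lam (S (S k)) t) (fun t => C*PI*cos(PI*t) - D t)
               (fun t => - C*PI*PI*sin(PI*t) - Lam (S k) t)).
      + intro; apply derivable_pt_lim_minus; [apply dsin| apply HD].
      + intro; apply derivable_pt_lim_minus; [apply dcos| apply HD].
      + intros u hu. specialize (IH u hu). apply Rabs_le_between in IH. fold c in IH.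
        replace (- C * PI * PI * sin (PI * u)) with (- (sin (PI*u) * c)).
        2:{ unfold C. field. lra. }
        lra.
      + rewrite a0, Rmult_0_r, sin_0; lra.
      + rewrite a1, Rmult_1_r, sin_PI; lra.
      + auto. }
    assert (B2 : 0 <= (fun t => C * sin (PI*t) + Lam (S (S k)) t) t).
    { apply (concave_nonneg (fun t => C * sin (PI*t) + Lam (S (S k)) t) (fun t => C*PI*cos(PI*t) + D t)
               (fun t => - C*PI*PI*sin(PI*t) + Lam (S k) t)).
      + intro; apply derivable_pt_lim_plus; [apply dsin| apply HD].
      + intro; apply derivable_pt_lim_plus; [apply dcos| apply HD].
      + intros u hu. specialize (IH u hu). apply Rabs_le_between in IH. fold c in IH.
        replace (- C * PI * PI * sin (PI * u)) with (- (sin (PI*u) * c)).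
        2:{ unfold C. field. lra. }
        lra.
      + rewrite a0, Rmult_0_r, sin_0; lra.
      + rewrite a1, Rmult_1_r, sin_PI; lra.
      + auto. }
    simpl in B1, B2. apply Rabs_le. lra.
Qed.

Lemma sup_lub a b f M : a <= b -> (forall t, a <= t <= b -> Rabs (f t) <= M) ->
  is_lub (fun v => exists t, a <= t <= b /\ v = Rabs (f t)) (sup_norm a b f).
Proof.
  intros hab hM. unfold sup_norm.
  apply epsilon_spec.
  destruct (completeness (fun v => exists t, a <= t <= b /\ v = Rabs (f t))) as [m hm].
  - exists M. intros v [t [ht ->]]. auto.
  - exists (Rabs (f a)). exists a. split; [lra|auto].
  - exists m; exact hm.
Qed.

Lemma sup_ge a b f M t : a <= b -> (forall t, a <= t <= b -> Rabs (f t) <= M) ->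
  a <= t <= b -> Rabs (f t) <= sup_norm a b f.
Proof.
  intros hab hM ht. destruct (sup_lub a b f M hab hM) as [h1 _].
  apply h1. exists t; auto.
Qed.

Lemma sup_le a b f M K : a <= b -> (forall t, a <= t <= b -> Rabs (f t) <= M) ->
  (forall t, a <= t <= b -> Rabs (f t) <= K) -> sup_norm a b f <= K.
Proof.
  intros hab hM hK. destruct (sup_lub a b f M hab hM) as [_ h2].
  apply h2. intros v [t [ht ->]]. auto.
Qed.

Lemma derive_cont a b g t l : a <= t <= b -> derive_within a b g t l -> continuous_within a b g t.
Proof.
  intros ht hd eps heps.
  destruct (hd 1 ltac:(lra)) as [d [hd0 hd1]].
  assert (hL : 0 < Rabs l + 1) by (pose proof (Rabs_pos l); lra).
  exists (Rmin d (eps / (Rabs l + 1))). split.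
  { apply Rmin_pos; [lra|]. apply Rdiv_lt_0_compat; lra. }
  intros s hs hst.
  destruct (Req_dec s t) as [->|hne].
  { rewrite Rminus_eq_0, Rabs_R0; lra. }
  set (h := s - t).
  assert (hh : h <> 0) by (unfold h; lra).
  assert (hd2 : Rabs h < d) by (unfold h; pose proof (Rmin_l d (eps / (Rabs l + 1))); lra).
  assert (hd3 : Rabs h < eps / (Rabs l + 1)) by (unfold h; pose proof (Rmin_r d (eps / (Rabs l + 1))); lra).
  assert (hth : a <= t + h <= b) by (unfold h; lra).
  specialize (hd1 h hh hd2 hth).
  replace (t + h) with s in hd1 by (unfold h; ring).
  set (q := (g s - g t) / h) in hd1.
  assert (Rabs q <= Rabs l + 1).
  { replace q with ((q - l) + l) by ring. pose proof (Rabs_triang (q - l) l). lra. }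
  replace (g s - g t) with (h * q) by (unfold q; field; auto).
  rewrite Rabs_mult.
  assert (Rabs h * Rabs q <= Rabs h * (Rabs l + 1)) by (apply Rmult_le_compat_l; [apply Rabs_pos|lra]).
  assert (Rabs h * (Rabs l + 1) < eps).
  { apply (Rmult_lt_compat_r (Rabs l + 1)) in hd3; [|lra].
    replace (eps / (Rabs l + 1) * (Rabs l + 1)) with eps in hd3 by (field; lra). lra. }
  lra.
Qed.

Lemma C_on_cont m a b f : C_on m a b f -> forall t, a <= t <= b -> continuous_within a b f t.
Proof.
  intros [D [h0 [hd hc]]] t ht.
  assert (cD : continuous_within a b (D 0%nat) t).
  { destruct m as [|m]. - apply hc; auto. - apply (derive_cont a b _ t (D 1%nat t)); auto.
    apply hd; [lia|auto]. }
  intros eps heps. destruct (cD eps heps) as [d [hd0 hd1]]. exists d. split; auto.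
  intros s hs hst. rewrite <- (h0 s hs), <- (h0 t ht). auto.
Qed.

Definition clamp a b t := Rmax a (Rmin b t).

Lemma clamp_in a b t : a <= b -> a <= clamp a b t <= b.
Proof. intros; unfold clamp, Rmax, Rmin; repeat destruct Rle_dec; lra. Qed.
Lemma clamp_id a b t : a <= t <= b -> clamp a b t = t.
Proof. intros; unfold clamp, Rmax, Rmin; repeat destruct Rle_dec; lra. Qed.
Lemma clamp_lip a b s t : a <= b -> Rabs (clamp a b s - clamp a b t) <= Rabs (s - t).
Proof. intros; unfold clamp, Rmax, Rmin; repeat destruct Rle_dec; split_Rabs; lra. Qed.

Lemma cont_bounded a b f : a <= b -> (forall t, a <= t <= b -> continuous_within a b f t) ->
  exists M, forall t, a <= t <= b -> Rabs (f t) <= M.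
Proof.
  intros hab hc.
  set (g := fun t => Rabs (f (clamp a b t))).
  assert (cg : forall t, continuity_pt g t).
  { intros t. unfold continuity_pt, continue_in, limit1_in, limit_in. simpl.
    intros eps heps.
    destruct (hc (clamp a b t) (clamp_in a b t hab) eps heps) as [d [hd0 hd1]].
    exists d. split; auto. intros s [_ hs]. unfold R_dist in *. unfold g.
    pose proof (clamp_lip a b s t hab).
    specialize (hd1 (clamp a b s) (clamp_in a b s hab) ltac:(lra)).
    pose proof (Rabs_triang_inv (f (clamp a b s)) (f (clamp a b t))).
    pose proof (Rabs_triang_inv (f (clamp a b t)) (f (clamp a b s))).
    rewrite (Rabs_minus_sym (f (clamp a b t))) in H1.
    split_Rabs; lra. }
  destruct (continuity_ab_maj g a b hab (fun c _ => cg c)) as [Mx [hM _]].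
  exists (g Mx). intros t ht. specialize (hM t ht). unfold g in hM |- *.
  rewrite clamp_id in hM; auto.
Qed.

Lemma x_mono (x : nat -> R) N : (forall i, (i < N)%nat -> x i < x (S i)) ->
  forall i j, (i <= j <= N)%nat -> x i <= x j.
Proof.
  intros Hx i j. induction j as [|j IH]; intros hij.
  - replace i with 0%nat by lia. lra.
  - destruct (Nat.eq_dec i (S j)) as [->|hne]; [lra|].
    pose proof (Hx j ltac:(lia)). pose proof (IH ltac:(lia)). lra.
Qed.

Lemma x_strict (x : nat -> R) N : (forall i, (i < N)%nat -> x i < x (S i)) ->
  forall i j, (i < j <= N)%nat -> x i < x j.
Proof.
  intros Hx i j hij. destruct j as [|j]; [lia|].
  pose proof (x_mono x N Hx i j ltac:(lia)). pose proof (Hx j ltac:(lia)). lra.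
Qed.

Lemma find_interval (x : nat -> R) N t : (forall i, (i < N)%nat -> x i < x (S i)) ->
  forall m, (1 <= m <= N)%nat -> x 0%nat <= t <= x m ->
  exists n, (1 <= n <= m)%nat /\ x (n - 1)%nat <= t <= x n.
Proof.
  intros Hx m. induction m as [|m IH]; intros hm ht; [lia|].
  destruct (Nat.eq_dec m 0) as [->|hm0].
  - exists 1%nat. split; [lia|]. simpl. lra.
  - destruct (Rle_or_lt t (x m)).
    + destruct (IH ltac:(lia) ltac:(lra)) as [n [hn hn2]]. exists n. split; [lia|auto].
    + exists (S m). split; [lia|]. replace (S m - 1)%nat with m by lia. lra.
Qed.

Lemma alpha_nonneg alpha N : 0 <= alpha_max alpha N.
Proof. induction N; simpl; [lra|]. pose proof (Rmax_l (alpha_max alpha N) (Rabs (alpha (S N)))). lra. Qed.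

Lemma alpha_le alpha N n : (1 <= n <= N)%nat -> Rabs (alpha n) <= alpha_max alpha N.
Proof.
  induction N; intros hn; [lia|]. simpl.
  destruct (Nat.eq_dec n (S N)) as [->|hne]; [apply Rmax_r|].
  pose proof (Rmax_l (alpha_max alpha N) (Rabs (alpha (S N)))). pose proof (IHN ltac:(lia)). lra.
Qed.

Lemma alpha_lt1 alpha N : (forall n, (1 <= n <= N)%nat -> Rabs (alpha n) < 1) -> alpha_max alpha N < 1.
Proof.
  induction N; intros h; simpl; [lra|]. apply Rmax_lub_lt.
  - apply IHN. intros; apply h; lia.
  - apply h; lia.
Qed.

Lemma rho_le y N p l : (l <= p)%nat -> Rabs (y 0%nat l) <= rho_max y N p /\ Rabs (y N l) <= rho_max y N p.
Proof.
  induction p; intros hl; simpl.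
  - replace l with 0%nat by lia. split; [apply Rmax_l|apply Rmax_r].
  - destruct (Nat.eq_dec l (S p)) as [->|hne].
    + pose proof (Rmax_r (rho_max y N p) (Rmax (Rabs (y 0%nat (S p))) (Rabs (y N (S p))))).
      pose proof (Rmax_l (Rabs (y 0%nat (S p))) (Rabs (y N (S p)))).
      pose proof (Rmax_r (Rabs (y 0%nat (S p))) (Rabs (y N (S p)))). lra.
    + pose proof (Rmax_l (rho_max y N p) (Rmax (Rabs (y 0%nat (S p))) (Rabs (y N (S p))))).
      destruct (IHp ltac:(lia)). lra.
Qed.

Lemma sum_sub_scal (f g : nat -> R) c n :
  sum_f_R0 (fun l => f l - c * g l) n = sum_f_R0 f n - c * sum_f_R0 g n.
Proof. induction n; simpl; [ring|]. rewrite IHn. ring. Qed.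

Lemma sum_le_elem (f : nat -> R) n i : (forall j, 0 <= f j) -> (i <= n)%nat -> f i <= sum_f_R0 f n.
Proof.
  intros hf. induction n; intros hi; simpl.
  - replace i with 0%nat by lia. lra.
  - destruct (Nat.eq_dec i (S n)) as [->|hne].
    + pose proof (cond_pos_sum f n hf). lra.
    + pose proof (IHn ltac:(lia)). pose proof (hf (S n)). lra.
Qed.

Lemma pow_le1 r k : 0 <= r <= 1 -> r ^ k <= 1.
Proof. intros hr. induction k; simpl; [lra|]. pose proof (pow_le r k ltac:(lra)). nra. Qed.

Lemma frac01 lo hi t : lo < hi -> lo <= t <= hi ->
  (0 <= (hi - t)/(hi - lo) <= 1) /\ (0 <= (t - lo)/(hi - lo) <= 1).
Proof.
  intros h1 h2.
  assert (e1 : (hi - t)/(hi-lo) * (hi - lo) = hi - t) by (field; lra).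
  assert (e2 : (t - lo)/(hi-lo) * (hi - lo) = t - lo) by (field; lra).
  split; split; nra.
Qed.

Lemma Lam_bound_all Lam : is_lidstone_family Lam ->
  forall l u, 0 <= u <= 1 -> Rabs (Lam l u) <= (PI/3) / PI^(2*l).
Proof.
  intros HL l u hu. pose proof PI_ge. pose proof PI_lt.
  destruct l as [|k].
  - destruct HL as [HL0 _]. rewrite HL0. simpl. rewrite Rabs_right by lra. lra.
  - pose proof (lid_bound Lam HL k u hu).
    assert (sin (PI*u) <= 1) by apply SIN_bound.
    assert (0 < PI^(2*k+1)) by (apply pow_lt; lra).
    replace (PI / 3 / PI ^ (2 * S k)) with (1 * / (3 * PI^(2*k+1))).
    2:{ replace (2 * S k)%nat with (S (2*k+1)) by lia. simpl pow. field. repeat split; try apply pow_nonzero; lra. }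
    assert (0 <= / (3 * PI ^ (2 * k + 1))) by (apply Rlt_le, Rinv_0_lt_compat; lra).
    nra.
Qed.

Theorem corollary4p1
  (p N : nat) (x : nat -> R) (y : nat -> nat -> R) (alpha : nat -> R)
  (Lam : nat -> R -> R) (ell phi : R -> R)
  (HN : (1 <= N)%nat)
  (Hx : forall i, (i < N)%nat -> x i < x (S i))
  (HLam : is_lidstone_family Lam)
  (Halpha : in_Theta x N p alpha)
  (Hell_C : C_on (2 * p) (x 0%nat) (x N) ell)
  (Hell_eq : forall n, (1 <= n <= N)%nat -> forall t, x 0%nat <= t <= x N ->
       ell (L_map x N n t) = alpha n * ell t + q_fun Lam x y alpha N p n t)
  (Hphi : forall n, (1 <= n <= N)%nat -> forall t, x (n - 1)%nat <= t <= x n ->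
       phi t = sum_f_R0 (fun l =>
         (y (n - 1)%nat l * Lam l ((x n - t) / (x n - x (n - 1)%nat))
          + y n l * Lam l ((t - x (n - 1)%nat) / (x n - x (n - 1)%nat)))
         * (x n - x (n - 1)%nat) ^ (2 * l)) p) :
  sup_norm (x 0%nat) (x N) (fun t => ell t - phi t)
  <= alpha_max alpha N / (1 - alpha_max alpha N)
     * (sup_norm (x 0%nat) (x N) phi + M0 x y N p).
Proof.
  pose proof PI_ge as Hpi3. pose proof PI_lt as Hpi4.
  assert (HLB := Lam_bound_all Lam HLam).
  assert (HLB2 : forall l u, 0 <= u <= 1 -> Rabs (Lam l u) <= 2).
  { intros l u hu. pose proof (HLB l u hu).
    assert (1 <= PI^(2*l)) by (apply pow_R1_Rle; lra).
    assert (PI / 3 / PI ^ (2 * l) <= PI/3).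
    { unfold Rdiv. rewrite Rmult_assoc. apply Rmult_le_compat_l; [lra|].
      rewrite <- Rinv_mult. apply Rinv_le_contravar; nra. }
    lra. }
  assert (Hab : x 0%nat < x N) by (apply (x_strict x N Hx); lia).
  assert (Hhn : forall n, (1 <= n <= N)%nat ->
            0 < x n - x (n-1)%nat /\ x n - x (n-1)%nat <= x N - x 0%nat).
  { intros n hn. pose proof (x_strict x N Hx (n-1) n ltac:(lia)).
    pose proof (x_mono x N Hx 0 (n-1) ltac:(lia)).
    pose proof (x_mono x N Hx n N ltac:(lia)). lra. }
  assert (HA0 := alpha_nonneg alpha N).
  assert (HA1 : alpha_max alpha N < 1).
  { apply alpha_lt1. intros n hn. specialize (Halpha n hn). destruct (Hhn n hn).
    assert (a_coef x N n ^ (2*p) <= 1).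
    { apply pow_le1. unfold a_coef. split.
      - apply Rdiv_le_0_compat; lra.
      - apply (Rmult_le_reg_r (x N - x 0%nat)); [lra|].
        replace ((x n - x (n - 1)%nat) / (x N - x 0%nat) * (x N - x 0%nat)) with (x n - x (n-1)%nat) by (field; lra). lra. }
    lra. }
  assert (HH : 0 < x N - x 0%nat) by lra.
  assert (Hfind : forall t, x 0%nat <= t <= x N -> exists n, (1 <= n <= N)%nat /\ x (n - 1)%nat <= t <= x n).
  { intros t ht. destruct (find_interval x N t Hx N ltac:(lia) ht) as [n [hn ht2]].
    exists n; split; [lia|auto]. }
  set (T := fun n => sum_f_R0 (fun l => (Rabs (y (n-1)%nat l) + Rabs (y n l)) * 2 * Rabs (x n - x (n-1)%nat)^(2*l)) p).
  set (Pb := sum_f_R0 (fun i => T (S i)) (N-1)).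
  assert (HPb : forall t, x 0%nat <= t <= x N -> Rabs (phi t) <= Pb).
  { intros t ht. destruct (Hfind t ht) as [n [hn htn]]. destruct (Hhn n hn) as [hp _].
    rewrite (Hphi n hn t htn).
    destruct (frac01 (x (n-1)%nat) (x n) t ltac:(lra) htn) as [u1 u2].
    eapply Rle_trans; [apply sum_f_R0_triangle|].
    apply Rle_trans with (T n).
    - apply sum_Rle. intros l hl. rewrite Rabs_mult, <- RPow_abs.
      apply Rmult_le_compat_r; [apply pow_le, Rabs_pos|].
      eapply Rle_trans; [apply Rabs_triang|]. rewrite !Rabs_mult.
      pose proof (HLB2 l _ u1). pose proof (HLB2 l _ u2).
      pose proof (Rabs_pos (y (n-1)%nat l)). pose proof (Rabs_pos (y n l)).
      nra.
    - unfold Pb. replace (T n) with ((fun i => T (S i)) (n-1)%nat) by (simpl; f_equal; lia).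
      apply (sum_le_elem (fun i => T (S i))); [|lia].
      intros j. unfold T. apply cond_pos_sum. intros l.
      pose proof (Rabs_pos (y (S j - 1)%nat l)). pose proof (Rabs_pos (y (S j) l)).
      pose proof (pow_le (Rabs (x (S j) - x (S j - 1)%nat)) (2*l) (Rabs_pos _)).
      nra. }
  destruct (cont_bounded (x 0%nat) (x N) ell ltac:(lra) (C_on_cont _ _ _ _ Hell_C)) as [Me HMe].
  assert (HEb : forall t, x 0%nat <= t <= x N -> Rabs (ell t - phi t) <= Me + Pb).
  { intros t ht. pose proof (Rabs_triang (ell t) (- phi t)). rewrite Rabs_Ropp in H.
    pose proof (HMe t ht). pose proof (HPb t ht). unfold Rminus. lra. }
  set (K := sup_norm (x 0%nat) (x N) (fun t => ell t - phi t)).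
  set (P := sup_norm (x 0%nat) (x N) phi).
  set (A := alpha_max alpha N) in *.
  set (sig := fun s => sum_f_R0 (fun l => (y 0%nat l * Lam l ((x N - s)/(x N - x 0%nat))
        + y N l * Lam l ((s - x 0%nat)/(x N - x 0%nat))) * (x N - x 0%nat)^(2*l)) p).
  assert (Hsig : forall s, x 0%nat <= s <= x N -> Rabs (sig s) <= M0 x y N p).
  { intros s hs. destruct (frac01 (x 0%nat) (x N) s Hab hs) as [u1 u2].
    unfold sig, M0.
    eapply Rle_trans; [apply sum_f_R0_triangle|].
    rewrite scal_sum. apply sum_Rle. intros l hl.
    destruct (rho_le y N p l hl) as [r1 r2].
    pose proof (HLB l _ u1). pose proof (HLB l _ u2).
    assert (hL : 0 <= PI/3/PI^(2*l)).
    { apply Rdiv_le_0_compat; [lra|apply pow_lt; lra]. }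
    set (L := PI/3/PI^(2*l)) in *.
    rewrite Rabs_mult, (Rabs_right ((x N - x 0%nat)^(2*l))) by (apply Rle_ge, pow_le; lra).
    set (rho := rho_max y N p) in *.
    assert (Rabs (y 0%nat l * Lam l ((x N - s) / (x N - x 0%nat)) +
        y N l * Lam l ((s - x 0%nat) / (x N - x 0%nat))) <= rho * L + rho * L).
    { eapply Rle_trans; [apply Rabs_triang|]. rewrite !Rabs_mult.
      pose proof (Rabs_pos (y 0%nat l)). pose proof (Rabs_pos (y N l)).
      pose proof (Rabs_pos (Lam l ((x N - s) / (x N - x 0%nat)))).
      pose proof (Rabs_pos (Lam l ((s - x 0%nat) / (x N - x 0%nat)))).
      apply Rplus_le_compat; apply Rmult_le_compat; auto. }
    replace (((x N - x 0%nat) / PI) ^ (2 * l) * (2 * rho * PI / 3))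
      with ((rho * L + rho * L) * (x N - x 0%nat)^(2*l)).
    2:{ unfold L. unfold Rdiv. rewrite Rpow_mult_distr, pow_inv. field.
        repeat split; try apply pow_nonzero; lra. }
    apply Rmult_le_compat_r; [apply pow_le; lra|auto]. }
  assert (HK0 : forall t, x 0%nat <= t <= x N -> Rabs (ell t - phi t) <= K).
  { intros t ht. exact (sup_ge _ _ (fun t => ell t - phi t) _ t (Rlt_le _ _ Hab) HEb ht). }
  assert (HP0 : forall t, x 0%nat <= t <= x N -> Rabs (phi t) <= P).
  { intros t ht. exact (sup_ge _ _ phi _ t (Rlt_le _ _ Hab) HPb ht). }
  assert (Hmain : forall t, x 0%nat <= t <= x N -> Rabs (ell t - phi t) <= A * (K + P + M0 x y N p)).
  { intros t ht. destruct (Hfind t ht) as [n [hn htn]]. destruct (Hhn n hn) as [hp hle].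
    destruct (frac01 (x (n-1)%nat) (x n) t ltac:(lra) htn) as [u1 u2].
    set (s := x 0%nat + (x N - x 0%nat) * ((t - x (n-1)%nat)/(x n - x (n-1)%nat))).
    assert (hs : x 0%nat <= s <= x N).
    { unfold s. split; nra. }
    assert (Ls : L_map x N n s = t).
    { unfold L_map, a_coef, s. field. split; lra. }
    assert (e1 : (x n - t)/(x n - x (n-1)%nat) = (x N - s)/(x N - x 0%nat)).
    { unfold s. field. split; lra. }
    assert (e2 : (t - x (n-1)%nat)/(x n - x (n-1)%nat) = (s - x 0%nat)/(x N - x 0%nat)).
    { unfold s. field. split; lra. }
    assert (Hq : q_fun Lam x y alpha N p n s - phi t = - alpha n * sig s).
    { rewrite (Hphi n hn t htn). unfold q_fun, sig. rewrite e1, e2.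
      match goal with |- sum_f_R0 ?Q p - sum_f_R0 ?F p = - ?c * sum_f_R0 ?G p =>
        assert (E: sum_f_R0 Q p = sum_f_R0 F p - c * sum_f_R0 G p) end.
      { rewrite <- sum_sub_scal. apply sum_eq. intros l _.
        replace ((x n - x (n-1)%nat)^(2*l)) with (a_coef x N n ^(2*l) * (x N - x 0%nat)^(2*l)).
        - ring.
        - rewrite <- Rpow_mult_distr. f_equal. unfold a_coef. field. lra. }
      rewrite E. ring. }
    rewrite <- Ls, (Hell_eq n hn s hs), Ls.
    replace (alpha n * ell s + q_fun Lam x y alpha N p n s - phi t)
      with (alpha n * ((ell s - phi s) + phi s - sig s)) by lra.
    rewrite Rabs_mult.
    pose proof (alpha_le alpha N n hn). fold A in H.
    pose proof (HK0 s hs). pose proof (HP0 s hs). pose proof (Hsig s hs).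
    assert (Rabs (ell s - phi s + phi s - sig s) <= K + P + M0 x y N p).
    { replace (ell s - phi s + phi s - sig s) with ((ell s - phi s + phi s) + - sig s) by ring.
      eapply Rle_trans; [apply Rabs_triang|]. rewrite Rabs_Ropp.
      pose proof (Rabs_triang (ell s - phi s) (phi s)). lra. }
    apply Rmult_le_compat; auto; apply Rabs_pos. }
  assert (HK : K <= A * (K + P + M0 x y N p)).
  { apply (sup_le _ _ (fun t => ell t - phi t) (Me + Pb)); auto; lra. }
  apply (Rmult_le_reg_r (1 - A)); [lra|].
  replace (A / (1 - A) * (P + M0 x y N p) * (1 - A)) with (A * (P + M0 x y N p)) by (field; lra).
  lra.
Qed.
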